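(* The quantum channel $\Pi(\rho)=\sum_{i=1}^d\langle i|\rho|i\rangle\,\tau_i$ is the unique quantum channel $\mathcal P$ on $S$ that (1) is activity breaking; (2) satisfies $\mathcal P(\mathsf{St}(S))=\mathsf P(S)$; (3) is covariant under the time evolution, i.e. $\mathcal U_t\circ\mathcal P=\mathcal P\circ\mathcal U_t$ for all $t\in\mathbb R$, where $\mathcal U_t(\rho)=e^{-itH}\rho e^{itH}$; and (4) preserves the energy ordering of the eigenstates, i.e. $\mathrm{Tr}[H\mathcal P(|i\rangle\langle i|)]\le\mathrm{Tr}[H\mathcal P(|j\rangle\langle j|)]$ for all $i\le j$.
   Context: $S$ is a $d$-dimensional quantum system with non-degenerate Hamiltonian $H=\sum_i E_i|i\rangle\langle i|$, $E_1<\dots<E_d$. $\mathsf{St}(S)$ is the set of density matrices; $\mathsf P(S)$ is the set of passive states, i.e. states $\sum_ip_i|i\rangle\langle i|$ with $p_1\ge\dots\ge p_d$. A channel is activity breaking if it maps every state into $\mathsf P(S)$. For $j=1,\dots,d$, $\tau_j=\frac1j\sum_{i=1}^j|i\rangle\langle i|$. *)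

(* Defs.v *)
From mathcomp Require Import all_boot all_order all_algebra all_reals.
From mathcomp Require Import complex.
From mathcomp Require Import normedtype trigo.

Set Implicit Arguments.
Unset Strict Implicit.
Unset Printing Implicit Defensive.

Import Order.TTheory GRing.Theory Num.Theory.
Local Open Scope ring_scope.

Section Quantum.
Variable R : realType.
Local Notation C := R[i].

Definition adj {m n} (A : 'M[C]_(m, n)) : 'M[C]_(n, m) :=
  (map_mx (fun z => z^*) A)^T.

(* positive semidefinite kernel over a finite index type:
   v^dagger A v >= 0 (i.e. real and nonnegative) for all vectors v *)
Definition psdF (I : finType) (A : I -> I -> C) : Prop :=
  forall v : I -> C, 0 <= \sum_(x : I) \sum_(y : I) (v x)^* * A x y * v y.

Definition psd {d} (A : 'M[C]_d) : Prop := psdF (fun i j => A i j).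

Definition is_state {d} (rho : 'M[C]_d) : Prop := psd rho /\ \tr rho = 1.

(* P(S): passive states sum_i p_i |i><i| with p_1 >= ... >= p_d
   (index 0 = lowest energy level) *)
Definition passive {d} (rho : 'M[C]_d) : Prop :=
  is_state rho /\ is_diag_mx rho /\
  (forall i j : 'I_d, (i <= j)%N -> rho j j <= rho i i).

Definition linear_map {d} (P : 'M[C]_d -> 'M[C]_d) : Prop :=
  forall (a : C) (A B : 'M[C]_d), P (a *: A + B) = a *: P A + P B.

(* (id_n (x) P) applied to an operator X on C^n (x) C^d *)
Definition ampliation {d} (n : nat) (P : 'M[C]_d -> 'M[C]_d)
  (X : 'I_n * 'I_d -> 'I_n * 'I_d -> C) : 'I_n * 'I_d -> 'I_n * 'I_d -> C :=
  fun ai bj => P (\matrix_(i, j) X (ai.1, i) (bj.1, j)) ai.2 bj.2.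

Definition completely_positive {d} (P : 'M[C]_d -> 'M[C]_d) : Prop :=
  forall (n : nat) (X : 'I_n * 'I_d -> 'I_n * 'I_d -> C),
    psdF X -> psdF (ampliation P X).

Definition trace_preserving {d} (P : 'M[C]_d -> 'M[C]_d) : Prop :=
  forall A, \tr (P A) = \tr A.

Definition quantum_channel {d} (P : 'M[C]_d -> 'M[C]_d) : Prop :=
  [/\ linear_map P, completely_positive P & trace_preserving P].

Definition activity_breaking {d} (P : 'M[C]_d -> 'M[C]_d) : Prop :=
  forall rho, is_state rho -> passive (P rho).

Definition proj {d} (i : 'I_d) : 'M[C]_d := delta_mx i i.

(* tau_j = (1/j) sum_{i<=j} |i><i| ; with 0-based index j this is
   1/(j+1) sum_{i <= j} |i><i| *)
Definition tau {d} (j : 'I_d) : 'M[C]_d :=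
  (j.+1%:R)^-1 *: \sum_(i < d | (i <= j)%N) proj i.

Definition Pi {d} (rho : 'M[C]_d) : 'M[C]_d := \sum_(i < d) rho i i *: tau i.

Definition ham {d} (E : 'I_d -> R) : 'M[C]_d := diag_mx (\row_k ((E k)%:C)%C).

Definition expi (x : R) : C := (cos x +i* sin x)%C.

Definition evol {d} (E : 'I_d -> R) (t : R) : 'M[C]_d :=
  diag_mx (\row_k expi (- (t * E k))).

Definition Ut {d} (E : 'I_d -> R) (t : R) (rho : 'M[C]_d) : 'M[C]_d :=
  evol E t *m rho *m adj (evol E t).

Definition four_properties {d} (E : 'I_d -> R) (P : 'M[C]_d -> 'M[C]_d) : Prop :=
  [/\ activity_breaking P,
      (forall sigma, (exists rho, is_state rho /\ P rho = sigma) <-> passive sigma),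
      (forall (t : R) (rho : 'M[C]_d), Ut E t (P rho) = P (Ut E t rho))
    & (forall i j : 'I_d, (i <= j)%N ->
         \tr (ham E *m P (proj i)) <= \tr (ham E *m P (proj j)))].

End Quantum.

(* Main.v *)
Require Import Defs.
From mathcomp Require Import all_boot all_order all_algebra all_reals.
From mathcomp Require Import complex.
From mathcomp Require Import normedtype trigo.
From mathcomp Require Import ring lra zify.
Import Order.TTheory GRing.Theory Num.Theory.
Local Open Scope ring_scope.

Lemma sum_le_nat (V : zmodType) (d j : nat) (f : nat -> V) : (j < d)%N ->
  \sum_(k < d) (if (k <= j)%N then f k else 0) = \sum_(0 <= k < j.+1) f k.
Proof.
move=> jd; rewrite -(big_mkord xpredT (fun k => if (k <= j)%N then f k else 0)).
rewrite (big_cat_nat _ (n:=j.+1)) //=.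
rewrite [X in _ + X]big_nat_cond [X in _ + X]big1 ?addr0.
  by apply: eq_big_nat => i /andP[_ ij]; rewrite -ltnS ij.
by move=> i /andP[/andP[ji _] _]; rewrite leqNgt ji.
Qed.

Lemma tauE (R : realType) d (j k l : 'I_d) :
  @tau R d j k l = if k == l then (if (k <= j)%N then (j.+1%:R)^-1 else 0) else 0.
Proof.
rewrite /tau mxE summxE /proj.
rewrite (eq_bigr (fun i => ((k == i) && (l == i))%:R)); last by move=> i _; rewrite mxE.
case: eqP => [<-|/eqP kl]; last first.
  rewrite big1 ?mulr0 // => i _; case: (eqVneq k i) => [ik|] //=.
  by rewrite -ik eq_sym (negbTE kl).
case: (leqP k j) => kj.
  rewrite (bigD1 k) //= eqxx big1 ?addr0 ?mulr1 // => i /andP[_ ik].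
  by rewrite eq_sym (negbTE ik).
rewrite big1 ?mulr0 // => i ij; case: eqP => //= ik.
by move: ij; rewrite -ik leqNgt kj.
Qed.

Definition cf (R : realType) (k i : nat) : R[i] :=
  if (k <= i)%N then (i.+1%:R)^-1 else 0.

Lemma PiE (R : realType) d (rho : 'M[R[i]]_d) (k l : 'I_d) :
  Pi rho k l = if k == l then \sum_i rho i i * cf R k i else 0.
Proof.
rewrite /Pi summxE; case: eqP => [<-|/eqP kl].
  by apply: eq_bigr => i _; rewrite mxE tauE eqxx /cf.
by rewrite big1 // => i _; rewrite mxE tauE (negbTE kl) mulr0.
Qed.

Lemma cf_ge0 (R : realType) k i : 0 <= cf R k i.
Proof. by rewrite /cf; case: ifP => // _; rewrite invr_ge0 ler0n. Qed.

Lemma tr_tau (R : realType) d (j : 'I_d) : \tr (@tau R d j) = 1.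
Proof.
rewrite /mxtrace (eq_bigr (fun k : 'I_d => if (k <= j)%N then (j.+1%:R)^-1 else 0)).
  rewrite (@sum_le_nat _ d j (fun _ => (j.+1%:R)^-1 : R[i])) // sumr_const_nat subn0.
  by rewrite -[RHS](@mulVf _ (j.+1%:R)) ?pnatr_eq0 // mulr_natr.
by move=> k _; rewrite tauE eqxx.
Qed.

Lemma Pi_lin (R : realType) d : linear_map (@Pi R d).
Proof.
move=> a A B; rewrite /Pi scaler_sumr -big_split /=; apply: eq_bigr => i _.
by rewrite !mxE scalerDl scalerA.
Qed.

Lemma tr_sum (R : realType) d (I : finType) (F : I -> 'M[R[i]]_d) :
  \tr (\sum_i F i) = \sum_i \tr (F i).
Proof.
rewrite /mxtrace (eq_bigr (fun k => \sum_i F i k k)); last by move=> k _; rewrite summxE.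
by rewrite exchange_big.
Qed.

Lemma Pi_tp (R : realType) d : trace_preserving (@Pi R d).
Proof.
move=> A; rewrite /Pi tr_sum; apply: eq_bigr => i _.
by rewrite mxtraceZ tr_tau mulr1.
Qed.

Lemma psd_diag (R : realType) d (A : 'M[R[i]]_d) :
  (forall x y, x != y -> A x y = 0) -> (forall x, 0 <= A x x) -> psd A.
Proof.
move=> Ad Ap v; apply: sumr_ge0 => x _.
rewrite (bigD1 x) //= big1 ?addr0; last by move=> y /negbTE yx; rewrite Ad ?mulr0 ?mul0r // eq_sym yx.
by rewrite mulrAC mulr_ge0 // mulrC mul_conjC_ge0.
Qed.

Lemma psd_diag_ge0 (R : realType) d (A : 'M[R[i]]_d) x : psd A -> 0 <= A x x.
Proof.
move=> H; have := H (fun y => (y == x)%:R).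
rewrite (bigD1 x) //= [X in _ + X]big1 => [|y /negbTE yx]; last first.
  by apply: big1 => z _; rewrite yx rmorph0 !mul0r.
rewrite addr0 (bigD1 x) //= [X in _ + X]big1 => [|y /negbTE yx]; last by rewrite yx mulr0.
by rewrite addr0 eqxx rmorph1 mul1r mulr1.
Qed.

Lemma sum_ge_nat (V : zmodType) (d k : nat) (f : nat -> V) : (k <= d)%N ->
  \sum_(i < d) (if (k <= i)%N then f i else 0) = \sum_(k <= i < d) f i.
Proof.
move=> kd; rewrite -(big_mkord xpredT (fun i => if (k <= i)%N then f i else 0)).
rewrite (big_cat_nat _ (n:=k)) //=.
rewrite [X in X + _]big_nat_cond [X in X + _]big1 ?add0r.
  by apply: eq_big_nat => i /andP[ki _]; rewrite ki.
by move=> i /andP[/andP[_ ik] _]; rewrite leqNgt ik.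
Qed.

Lemma Pi_passive (R : realType) d (rho : 'M[R[i]]_d) :
  is_state rho -> passive (Pi rho).
Proof.
move=> [rp rt]; have Pd : forall k, 0 <= Pi rho k k.
  by move=> k; rewrite PiE eqxx; apply: sumr_ge0 => i _; rewrite mulr_ge0 ?cf_ge0 ?psd_diag_ge0.
split; [split|split].
- by apply: psd_diag => // x y xy; rewrite PiE ifN.
- by rewrite Pi_tp.
- by apply/is_diag_mxP => x y xy; rewrite PiE ifN.
move=> i j ij; rewrite !PiE !eqxx; apply: ler_sum => k _.
apply: ler_wpM2l; first exact: psd_diag_ge0.
rewrite /cf; case: (leqP j k) => jk; first by rewrite (leq_trans ij jk).
by case: ifP => _ //; rewrite invr_ge0 ler0n.
Qed.

Lemma Pi_surj (R : realType) d (sigma : 'M[R[i]]_d) :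
  passive sigma -> exists rho, is_state rho /\ Pi rho = sigma.
Proof.
move=> [[sp st] [/is_diag_mxP sd sdec]].
pose s n : R[i] := if insub n is Some k then sigma k k else 0.
have sE : forall k : 'I_d, s k = sigma k k.
  by move=> k; rewrite /s; case: insubP => [u _ /val_inj ->|] //; rewrite ltn_ord.
have sd0 : s d = 0 by rewrite /s; case: insubP => [u|//]; rewrite ltnn.
have sdec' : forall n, 0 <= s n - s n.+1.
  move=> n; rewrite subr_ge0 /s; case: insubP => [u ud uE|nd]; last first.
    by case: insubP => [v vd _|//]; apply: psd_diag_ge0.
  case: insubP => [v _ vE|nd]; last by rewrite (ltn_trans (ltnSn n) ud) in nd.
  by apply: sdec; rewrite uE vE.
pose rho : 'M[R[i]]_d := diag_mx (\row_i (i.+1%:R * (s i - s i.+1))).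
have rhoP : Pi rho = sigma.
  apply/matrixP => k l; rewrite PiE; case: eqP => [<-|/eqP kl]; last by rewrite sd.
  rewrite (eq_bigr (fun i : 'I_d => if (k <= i)%N then s i - s i.+1 else 0)); last first.
    move=> i _; rewrite /rho mxE eqxx mulr1n mxE /cf; case: ifP => _; last by rewrite mulr0.
    by rewrite mulrC mulrA mulVf ?mul1r // pnatr_eq0.
  transitivity (\sum_(k <= i < d) (s i - s i.+1)); first exact: (@sum_ge_nat _ d k (fun i => s i - s i.+1) (ltnW (ltn_ord k))).
  transitivity (\sum_(k <= i < d) ((fun n => - s n) i.+1 - (fun n => - s n) i)).
    by apply: eq_bigr => i _; rewrite opprK addrC.
  by rewrite telescope_sumr ?(ltnW (ltn_ord k)) // sd0 oppr0 add0r opprK sE.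
exists rho; split => //; split.
  apply: psd_diag => [x y xy|x]; rewrite /rho mxE.
    by rewrite (negbTE xy) mulr0n.
  by rewrite eqxx mulr1n mxE mulr_ge0 ?ler0n.
by rewrite -Pi_tp rhoP.
Qed.

Lemma expiJ (R : realType) (x : R) : expi x * (expi x)^* = 1.
Proof.
rewrite /expi /=; apply/eqP; rewrite eq_complex /=; apply/andP; split; apply/eqP.
  by rewrite mulrN opprK -!expr2 cos2Dsin2.
by rewrite mulrN mulrC addrC subrr.
Qed.

Lemma UtE (R : realType) d (E : 'I_d -> R) t (M : 'M[R[i]]_d) k l :
  Ut E t M k l = expi (- (t * E k)) * M k l * (expi (- (t * E l)))^*.
Proof.
rewrite /Ut /evol /adj.
have -> : (map_mx (fun z : R[i] => z^*) (diag_mx (\row_k expi (- (t * E k)))))^T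
    = diag_mx (\row_k (expi (- (t * E k)))^*).
  apply/matrixP => x y; rewrite !mxE rmorphMn eq_sym.
  by case: eqP => [->|]; rewrite ?mulr0n ?mulr1n.
by rewrite mul_mx_diag mul_diag_mx !mxE.
Qed.

Lemma Pi_cov (R : realType) d (E : 'I_d -> R) t (rho : 'M[R[i]]_d) :
  Ut E t (Pi rho) = Pi (Ut E t rho).
Proof.
apply/matrixP => k l; rewrite UtE !PiE; case: eqP => [<-|_]; last by rewrite mulr0 mul0r.
rewrite mulrAC expiJ mul1r; apply: eq_bigr => i _.
by rewrite UtE [X in _ = X * _]mulrAC expiJ mul1r.
Qed.

Definition en (R : realType) d (E : 'I_d -> R) (n : nat) : R :=
  if insub n is Some k then E k else 0.
Arguments en {R d}.

Definition Av (R : realType) d (E : 'I_d -> R) (n : nat) : R :=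
  (\sum_(0 <= k < n.+1) en E k) / n.+1%:R.
Arguments Av {R d}.

Lemma enE (R : realType) d (E : 'I_d -> R) (k : 'I_d) : en E k = E k.
Proof. by rewrite /en; case: insubP => [u _ /val_inj ->|] //; rewrite ltn_ord. Qed.

Lemma en_lt (R : realType) d (E : 'I_d -> R)
  (HE : forall i j : 'I_d, (i < j)%N -> E i < E j) i j :
  (i < j)%N -> (j < d)%N -> en E i < en E j.
Proof.
move=> ij jd; rewrite /en; case: insubP => [u _ uE|]; last by rewrite (ltn_trans ij jd).
case: insubP => [v _ vE|]; last by rewrite jd.
by apply: HE; rewrite uE vE.
Qed.

Lemma Av_lt (R : realType) d (E : 'I_d -> R)
  (HE : forall i j : 'I_d, (i < j)%N -> E i < E j) n :
  (n.+1 < d)%N -> Av E n < Av E n.+1.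
Proof.
move=> nd; rewrite /Av [X in _ < X / _]big_nat_recr //=.
set S := \sum_(0 <= k < n.+1) en E k; set e := en E n.+1.
have Se : S < e * n.+1%:R.
  rewrite mulr_natr -[in X in _ *+ X](subn0 n.+1) -sumr_const_nat /S; apply: ltr_sum_nat => // i /andP[_ ni].
  by apply: en_lt => //; apply: ltn_trans nd.
rewrite ltr_pdivlMr ?ltr0n //.
have -> : S / n.+1%:R * n.+2%:R = S + S / n.+1%:R.
  by rewrite -(natr1 (R:=R) n.+1) mulrDr mulr1 divfK // pnatr_eq0.
by rewrite ltrD2l ltr_pdivrMr ?ltr0n.
Qed.

Lemma Av_lt_gen (R : realType) d (E : 'I_d -> R)
  (HE : forall i j : 'I_d, (i < j)%N -> E i < E j) m n :
  (m < n)%N -> (n < d)%N -> Av E m < Av E n.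
Proof.
elim: n => // n IH; rewrite ltnS leq_eqVlt => /orP[/eqP -> nd|mn nd].
  exact: Av_lt.
by apply: lt_trans (IH mn (ltnW nd)) _; apply: Av_lt.
Qed.

Lemma energy_tau (R : realType) d (E : 'I_d -> R) (j : 'I_d) :
  \tr (ham E *m @tau R d j) = (Av E j)%:C%C.
Proof.
rewrite /mxtrace /ham mul_diag_mx.
rewrite (eq_bigr (fun k : 'I_d => if (k <= j)%N then (en E k)%:C%C / j.+1%:R else 0)); last first.
  move=> k _; rewrite mxE [X in X * _]mxE tauE eqxx enE.
  by case: ifP => _; rewrite ?mulr0 // mulrC.
have := (@sum_le_nat _ d j (fun k => (en E k)%:C%C / j.+1%:R) (ltn_ord j)).
move=> /= ->.
rewrite -mulr_suml /Av rmorphM /= fmorphV rmorph_nat rmorph_sum.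
by [].
Qed.

Lemma sum_pair (V : nmodType) (I J : finType) (F : I * J -> V) :
  \sum_p F p = \sum_a \sum_j F (a, j).
Proof. by rewrite pair_bigA /=; apply: eq_bigr => [[a j]] _. Qed.

Lemma sum_pick (V : nmodType) (J : finType) (k : J) (F : J -> V) :
  \sum_j (if j == k then F j else 0) = F k.
Proof. by rewrite -big_mkcond /= big_pred1_eq. Qed.

Lemma Pi_cp (R : realType) d : completely_positive (@Pi R d).
Proof.
move=> n X Xp v; rewrite /ampliation.
pose Q (k i : 'I_d) := \sum_(a < n) \sum_(b < n) (v (a, k))^* * X (a, i) (b, i) * v (b, k).
have QP : forall k i, 0 <= Q k i.
  move=> k i; pose w (p : 'I_n * 'I_d) := if p.2 == i then v (p.1, k) else 0.
  have := Xp w; congr (_ <= _); rewrite sum_pair; apply: eq_bigr => a _.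
  rewrite (bigD1 i) //= [X in _ + X = _]big1 => [|x /negbTE xi]; last first.
    by apply: big1 => q _; rewrite /w /= xi rmorph0 !mul0r.
  rewrite addr0 /w /= eqxx sum_pair; apply: eq_bigr => b _.
  rewrite (bigD1 i) //= big1 => [|y /negbTE yi]; last by rewrite /= yi mulr0.
  by rewrite addr0 /= eqxx.
suff -> : (\sum_x \sum_y (v x)^* * Pi (\matrix_(i, j) X (x.1, i) (y.1, j)) x.2 y.2 * v y)
   = \sum_(k < d) \sum_(i < d) cf R k i * Q k i.
  by apply: sumr_ge0 => k _; apply: sumr_ge0 => i _; apply: mulr_ge0; rewrite ?cf_ge0.
rewrite sum_pair.
transitivity (\sum_(a < n) \sum_(k < d) \sum_(b < n) \sum_(i < d)
   cf R k i * ((v (a, k))^* * X (a, i) (b, i) * v (b, k))).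
  apply: eq_bigr => a _; apply: eq_bigr => k _; rewrite sum_pair; apply: eq_bigr => b _.
  rewrite (eq_bigr (fun l => if l == k then (v (a, k))^* *
        (\sum_i X (a, i) (b, i) * cf R k i) * v (b, k) else 0)); last first.
    move=> l _; rewrite PiE /= eq_sym; case: eqP => [->|_]; last by rewrite mulr0 mul0r.
    by congr (_ * _ * _); apply: eq_bigr => i _; rewrite mxE.
  rewrite sum_pick mulr_sumr mulr_suml; apply: eq_bigr => i _.
  by ring.
rewrite exchange_big /=; apply: eq_bigr => k _.
rewrite (eq_bigr (fun a => \sum_(i < d) \sum_(b < n)
   cf R k i * ((v (a, k))^* * X (a, i) (b, i) * v (b, k)))); last first.
  by move=> a _; rewrite exchange_big.
rewrite exchange_big /=; apply: eq_bigr => i _.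
by rewrite /Q mulr_sumr; apply: eq_bigr => a _; rewrite mulr_sumr.
Qed.

Lemma Pi_proj (R : realType) d (i : 'I_d) : Pi (@proj R d i) = @tau R d i.
Proof.
rewrite /Pi (bigD1 i) //= big1 ?addr0 => [|k /negbTE ki]; last by rewrite /proj mxE ki scale0r.
by rewrite /proj mxE eqxx scale1r.
Qed.

Lemma Av_le (R : realType) d (E : 'I_d -> R)
  (HE : forall i j : 'I_d, (i < j)%N -> E i < E j) (i j : 'I_d) :
  (i <= j)%N -> Av E i <= Av E j.
Proof.
rewrite leq_eqVlt => /orP[/eqP -> //|ij].
by apply/ltW/Av_lt_gen.
Qed.

Lemma Pi_four (R : realType) d (E : 'I_d -> R)
  (HE : forall i j : 'I_d, (i < j)%N -> E i < E j) : four_properties E (@Pi R d).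
Proof.
split.
- exact: Pi_passive.
- move=> sigma; split; first by move=> [rho [rs <-]]; apply: Pi_passive.
  exact: Pi_surj.
- by move=> t rho; apply: Pi_cov.
- by move=> i j ij; rewrite !Pi_proj !energy_tau lecR Av_le.
Qed.


Lemma lin0 (R : realType) d (P : 'M[R[i]]_d -> 'M[R[i]]_d) : linear_map P -> P 0 = 0.
Proof.
move=> Pl; have := Pl 1 0 0; rewrite scale1r addr0 scale1r => H.
by apply: (@addrI _ (P 0)); rewrite addr0 -H.
Qed.

Lemma linZ (R : realType) d (P : 'M[R[i]]_d -> 'M[R[i]]_d) : linear_map P ->
  forall a A, P (a *: A) = a *: P A.
Proof. by move=> Pl a A; have := Pl a A 0; rewrite !addr0 lin0 ?addr0. Qed.

Lemma linD (R : realType) d (P : 'M[R[i]]_d -> 'M[R[i]]_d) : linear_map P ->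
  forall A B, P (A + B) = P A + P B.
Proof. by move=> Pl A B; have := Pl 1 A B; rewrite !scale1r. Qed.

Lemma lin_sum (R : realType) d (P : 'M[R[i]]_d -> 'M[R[i]]_d) (I : finType) (F : I -> 'M[R[i]]_d) :
  linear_map P -> P (\sum_i F i) = \sum_i P (F i).
Proof. by move=> Pl; apply: big_morph; [exact: linD | exact: lin0]. Qed.

Lemma passive_le (R : realType) d (sigma : 'M[R[i]]_d) (j : 'I_d) :
  passive sigma -> sigma j j * j.+1%:R <= 1.
Proof.
move=> [[sp st] [_ sdec]].
rewrite mulr_natr -st.
have := (@sum_le_nat _ d j (fun _ => sigma j j) (ltn_ord j)).
rewrite sumr_const_nat subn0 => <-.
rewrite /mxtrace; apply: ler_sum => k _; case: ifP => kj.
  exact: sdec.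
exact: psd_diag_ge0.
Qed.

Lemma passive_eq (R : realType) d (sigma : 'M[R[i]]_d) (j : 'I_d) :
  passive sigma -> sigma j j = (j.+1%:R)^-1 -> sigma = @tau R d j.
Proof.
move=> [[sp st] [/is_diag_mxP sd sdec]] sj.
have D0 : forall k, sigma k k - tau R j k k = 0.
  move=> k0; apply: (@psumr_eq0P _ _ xpredT (fun k => sigma k k - tau R j k k)) => // [k _|].
    rewrite tauE eqxx subr_ge0; case: ifP => kj; last exact: psd_diag_ge0.
    by rewrite -sj; apply: sdec.
  by rewrite sumrB -/(mxtrace _) -/(mxtrace (tau R j)) st tr_tau subrr.
apply/matrixP => k l; case: (eqVneq k l) => [<-|kl].
  by apply/eqP; rewrite -subr_eq0 D0.
by rewrite sd // tauE ifN.
Qed.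

Lemma tr_delta (R : realType) d (a b : 'I_d) : \tr (delta_mx a b : 'M[R[i]]_d) = (a == b)%:R.
Proof.
rewrite /mxtrace (bigD1 a) //= big1 ?addr0 => [|k /negbTE ka]; last by rewrite mxE ka.
by rewrite mxE eqxx eq_sym.
Qed.

Lemma proj_state (R : realType) d (i : 'I_d) : is_state (@proj R d i).
Proof.
split; last by rewrite /proj tr_delta eqxx.
apply: psd_diag => [x y xy|x]; rewrite /proj mxE.
  case: (eqVneq x i) => [xi|xi] /=; last by [].
  by rewrite -xi eq_sym (negbTE xy).
by case: (_ && _); rewrite ?ler01 ?lexx.
Qed.

Lemma psd_rk1 (R : realType) d (w : 'I_d -> R[i]) :
  psd (\matrix_(x, y) (w x * (w y)^*) : 'M[R[i]]_d).
Proof.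
move=> v.
rewrite (eq_bigr (fun x => ((v x)^* * w x) * \sum_y ((w y)^* * v y))); last first.
  by move=> x _; rewrite mulr_sumr; apply: eq_bigr => y _; rewrite mxE; ring.
rewrite -mulr_suml.
have -> : \sum_y (w y)^* * v y = (\sum_x (v x)^* * w x)^*.
  by rewrite rmorph_sum; apply: eq_bigr => y _; rewrite rmorphM /= conjCK mulrC.
exact: mul_conjC_ge0.
Qed.

Lemma psdZ (R : realType) d (a : R[i]) (M : 'M[R[i]]_d) : 0 <= a -> psd M -> psd (a *: M).
Proof.
move=> a0 Mp v; rewrite (eq_bigr (fun x => a * \sum_y (v x)^* * M x y * v y)).
  by rewrite -mulr_sumr mulr_ge0.
by move=> x _; rewrite mulr_sumr; apply: eq_bigr => y _; rewrite mxE; ring.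
Qed.

Lemma diag_of_psd2 (R : realType) d (P : 'M[R[i]]_d -> 'M[R[i]]_d) (M : 'M[R[i]]_d) :
  linear_map P -> activity_breaking P -> psd M -> \tr M = 2 -> is_diag_mx (P M).
Proof.
move=> Pl Pa Mp Mt.
have St : is_state ((2 : R[i])^-1 *: M).
  split; first by apply: psdZ => //; rewrite invr_ge0 ler0n.
  by rewrite mxtraceZ Mt mulVf // pnatr_eq0.
have [_ [/is_diag_mxP Sd _]] := Pa _ St.
have -> : M = 2 *: ((2 : R[i])^-1 *: M) by rewrite scalerA mulfV ?scale1r // pnatr_eq0.
by apply/is_diag_mxP => x y xy; rewrite linZ // mxE Sd // mulr0.
Qed.

Lemma sym_psd (R : realType) d (a b : 'I_d) :
  psd (proj R a + delta_mx a b + delta_mx b a + proj R b : 'M[R[i]]_d).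
Proof.
pose w (x : 'I_d) : R[i] := ((x == a) + (x == b))%:R.
have -> : (proj R a + delta_mx a b + delta_mx b a + proj R b : 'M[R[i]]_d) =
    \matrix_(x, y) (w x * (w y)^*).
  apply/matrixP => x y; rewrite /proj !mxE /w conjC_nat -natrM -!natrD.
  by congr (_%:R); case: (x == a); case: (x == b); case: (y == a); case: (y == b).
exact: psd_rk1.
Qed.

Lemma sym_tr (R : realType) d (a b : 'I_d) : a != b ->
  \tr (proj R a + delta_mx a b + delta_mx b a + proj R b : 'M[R[i]]_d) = 2.
Proof.
move=> ab; rewrite !mxtraceD /proj !tr_delta eqxx (negbTE ab) eq_sym (negbTE ab).
by rewrite eqxx addr0 addr0 -natrD.
Qed.

Lemma expi_mulJ (R : realType) (x y : R) :
  expi x * (expi y)^* = (cos (x - y) +i* sin (x - y))%C.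
Proof.
rewrite /expi /=; apply/eqP; rewrite eq_complex /=; apply/andP; split; apply/eqP.
  by rewrite cosB; ring.
by rewrite sinB; ring.
Qed.

Lemma ci_neq1 (R : realType) : ('i%C : R[i]) != 1.
Proof. by rewrite eq_complex /= oner_eq0 andbF. Qed.

Lemma ci_neqJ (R : realType) : ('i%C : R[i]) != ('i%C)^*.
Proof. by rewrite eq_complex /= eqxx /= -subr_eq0 opprK -mulr2n pnatr_eq0. Qed.

Lemma cancel_neq (R : realType) (c c' x : R[i]) : c != c' -> c * x = c' * x -> x = 0.
Proof.
move=> cc h; apply/eqP; have : (c - c') * x == 0 by rewrite mulrBl h subrr.
by rewrite mulf_eq0 subr_eq0 (negbTE cc).
Qed.

Lemma P_off (R : realType) d (E : 'I_d -> R)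
  (HE : forall i j : 'I_d, (i < j)%N -> E i < E j) (P : 'M[R[i]]_d -> 'M[R[i]]_d) :
  linear_map P -> activity_breaking P ->
  (forall t rho, Ut E t (P rho) = P (Ut E t rho)) ->
  forall a b : 'I_d, a != b -> P (delta_mx a b) = 0.
Proof.
move=> Pl Pa Pc a b ab.
have Eab : E b - E a != 0.
  rewrite subr_eq0; case: (ltngtP a b) => [lt|lt|eq].
  - by rewrite gt_eqF ?HE.
  - by rewrite lt_eqF ?HE.
  - by move/val_inj: eq => eq; rewrite eq eqxx in ab.
pose t := (pi / 2) / (E b - E a).
have cE : expi (- (t * E a)) * (expi (- (t * E b)))^* = 'i%C.
  rewrite expi_mulJ; have -> : - (t * E a) - - (t * E b) = pi / 2.
    by rewrite opprK addrC -mulrBr /t divfK.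
  by rewrite cos_pihalf sin_pihalf.
have cJ : expi (- (t * E b)) * (expi (- (t * E a)))^* = ('i%C)^*.
  by rewrite -cE rmorphM /= conjCK mulrC.
have HM : forall k l, expi (- (t * E k)) * P (delta_mx a b) k l * (expi (- (t * E l)))^*
    = 'i%C * P (delta_mx a b) k l.
  move=> k l; rewrite -UtE Pc.
  have -> : Ut E t (delta_mx a b) = 'i%C *: delta_mx a b.
    apply/matrixP => x y; rewrite UtE !mxE.
    case: (eqVneq x a) => [->|xa]; case: (eqVneq y b) => [->|yb];
      by rewrite /= ?mulr1 ?mulr0 ?mul0r ?cE.
  by rewrite linZ // mxE.
have HN : forall k l, expi (- (t * E k)) * P (delta_mx b a) k l * (expi (- (t * E l)))^*
    = ('i%C)^* * P (delta_mx b a) k l.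
  move=> k l; rewrite -UtE Pc.
  have -> : Ut E t (delta_mx b a) = ('i%C)^* *: delta_mx b a.
    apply/matrixP => x y; rewrite UtE !mxE.
    case: (eqVneq x b) => [->|xa]; case: (eqVneq y a) => [->|yb];
      by rewrite /= ?mulr1 ?mulr0 ?mul0r ?cJ.
  by rewrite linZ // mxE.
have MN : forall k l, k != l -> P (delta_mx b a) k l = - P (delta_mx a b) k l.
  move=> k l kl.
  have := @diag_of_psd2 R d P _ Pl Pa (@sym_psd R d a b) (@sym_tr R d a b ab).
  rewrite !linD // => /is_diag_mxP /(_ k l kl); rewrite !mxE.
  have [_ [/is_diag_mxP -> // _]] := Pa _ (@proj_state R d a).
  have [_ [/is_diag_mxP -> // _]] := Pa _ (@proj_state R d b).
  by rewrite add0r addr0 addrC => /eqP; rewrite addr_eq0 => /eqP.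
apply/matrixP => k l; rewrite mxE; case: (eqVneq k l) => [<-|kl].
  apply: (@cancel_neq R ('i%C) 1); first exact: ci_neq1.
  by rewrite -HM mulrAC expiJ.
apply: (@cancel_neq R ('i%C) (('i%C)^*)); first exact: ci_neqJ.
rewrite -HM -[in RHS](opprK (P (delta_mx a b) k l)) -MN // mulrN -HN MN //.
by rewrite mulrN mulNr opprK.
Qed.

Lemma strict_id (d : nat) (h : nat -> nat) :
  (forall i j, (i < j)%N -> (j < d)%N -> (h i < h j)%N) ->
  (forall i, (i < d)%N -> (h i < d)%N) -> forall i, (i < d)%N -> h i = i.
Proof.
move=> hs hb.
have low : forall n, (n < d)%N -> (n <= h n)%N.
  elim => [//|n IH] nd; have := IH (ltnW nd); have := hs n n.+1 (ltnSn n) nd; lia.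
have up : forall m n, (n + m = d.-1)%N -> (n < d)%N -> (h n + m <= d.-1)%N.
  elim => [|m IH] n nm nd; first by have := hb n nd; lia.
  have h1 : (n.+1 + m = d.-1)%N by lia.
  have h2 : (n.+1 < d)%N by lia.
  have := IH n.+1 h1 h2; have := hs n n.+1 (ltnSn n) h2; lia.
move=> i id; have := low i id; have := up (d.-1 - i)%N i ltac:(lia) id; lia.
Qed.

Lemma P_expand (R : realType) d (E : 'I_d -> R)
  (HE : forall i j : 'I_d, (i < j)%N -> E i < E j) (P : 'M[R[i]]_d -> 'M[R[i]]_d) :
  linear_map P -> activity_breaking P ->
  (forall t rho, Ut E t (P rho) = P (Ut E t rho)) ->
  forall X, P X = \sum_i X i i *: P (proj R i).
Proof.
move=> Pl Pa Pc X; rewrite {1}(matrix_sum_delta X) lin_sum //; apply: eq_bigr => i _.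
rewrite lin_sum // (bigD1 i) //= big1 ?addr0 => [|j ji]; first by rewrite linZ.
by rewrite linZ // (@P_off R d E HE P Pl Pa Pc) 1?eq_sym // scaler0.
Qed.

Lemma P_hit (R : realType) d (E : 'I_d -> R)
  (HE : forall i j : 'I_d, (i < j)%N -> E i < E j) (P : 'M[R[i]]_d -> 'M[R[i]]_d) :
  quantum_channel P -> four_properties E P ->
  forall j : 'I_d, exists i : 'I_d, P (proj R i) = tau R j.
Proof.
move=> [Pl _ _] [Pa Psurj Pc _] j.
have Ptj : passive (tau R j) by rewrite -Pi_proj; apply: Pi_passive; apply: proj_state.
have [rho [[rp rt] Prho]] := (Psurj (tau R j)).2 Ptj.
have Hexp := @P_expand R d E HE P Pl Pa Pc rho; rewrite Prho in Hexp.
have jj := congr1 (fun M : 'M[R[i]]_d => M j j) Hexp; rewrite /= summxE tauE eqxx leqnn in jj.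
set q := (j.+1%:R)^-1 : R[i]; rewrite -/q in jj.
have ge0 : forall i, 0 <= rho i i * (q - P (proj R i) j j).
  move=> i; apply: mulr_ge0; first exact: psd_diag_ge0.
  rewrite subr_ge0 /q -div1r ler_pdivlMr ?ltr0n //.
  by apply: passive_le; apply: Pa; apply: proj_state.
have sum0 : \sum_i rho i i * (q - P (proj R i) j j) = 0.
  under eq_bigr do rewrite mulrBr.
  rewrite sumrB -mulr_suml -/(mxtrace rho) rt mul1r jj.
  by apply/eqP; rewrite subr_eq0; apply/eqP; apply: eq_bigr => i _; rewrite mxE.
have [i ri] : exists i, rho i i != 0.
  case: (pickP (fun i => rho i i != 0)) => [i ri|none]; first by exists i.
  exfalso; move: rt; rewrite /mxtrace big1 => [/eqP|i _]; first by rewrite eq_sym oner_eq0.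
  by have := none i; move/negbFE/eqP.
exists i; apply: passive_eq; first by apply: Pa; apply: proj_state.
have := @psumr_eq0P _ _ xpredT (fun i => rho i i * (q - P (proj R i) j j)) (fun i _ => ge0 i) sum0 i erefl.
by move/eqP; rewrite mulf_eq0 (negbTE ri) /= subr_eq0 => /eqP.
Qed.

Theorem mainTheorem18 (R : realType) (d : nat) (E : 'I_d -> R)
  (HE : forall i j : 'I_d, (i < j)%N -> E i < E j) :
  [/\ quantum_channel (@Pi R d), four_properties E (@Pi R d)
    & forall P : 'M[R[i]]_d -> 'M[R[i]]_d,
        quantum_channel P -> four_properties E P -> P =1 @Pi R d].
Proof.
split.
- split; [exact: Pi_lin | exact: Pi_cp | exact: Pi_tp].
- exact: Pi_four.
move=> P Pq P4 X.
have [Pl _ _] := Pq; have [Pa _ Pc Pord] := P4.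
pose g j := odflt j [pick i | P (proj R i) == tau R j].
have gP : forall j, P (proj R (g j)) = tau R j.
  move=> j; rewrite /g; case: pickP => [i /eqP //|none] /=.
  have [i hi] := @P_hit R d E HE P Pq P4 j.
  by move: (none i); rewrite hi eqxx.
have gs : forall j j' : 'I_d, (j < j')%N -> (g j < g j')%N.
  move=> j j' jj'; rewrite ltnNge; apply/negP => le.
  have := Pord _ _ le; rewrite !gP !energy_tau lecR.
  by rewrite lt_geF // Av_lt_gen.
have gid : forall j, g j = j.
  pose h n := if insub n is Some k then nat_of_ord (g k) else n.
  have hE : forall k : 'I_d, h k = g k.
    by move=> k; rewrite /h; case: insubP => [u _ /val_inj ->|] //; rewrite ltn_ord.
  have hs : forall i j, (i < j)%N -> (j < d)%N -> (h i < h j)%N.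
    move=> i j ij jd; have idd := ltn_trans ij jd.
    change (h (Ordinal idd) < h (Ordinal jd))%N; rewrite !hE; exact: gs.
  have hb : forall i, (i < d)%N -> (h i < d)%N.
    by move=> i idd; change (h (Ordinal idd) < d)%N; rewrite hE.
  by move=> j; apply/val_inj; rewrite /= -hE (@strict_id d h hs hb j (ltn_ord j)).
rewrite (@P_expand R d E HE P Pl Pa Pc X) /Pi; apply: eq_bigr => i _.
by have := gP i; rewrite gid => ->.
Qed.
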